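(* Consider a cryptomining facility with two machine types of capacities $c_1^M,c_2^M>0$ and per-unit mining rewards $r_1<r_2$, participating in a reg-up program with committed capacity $c_1\ge0$ and price $p_1$ and a reg-down program with committed capacity $c_2\ge 0$ and price $p_2$, with $c_1+c_2\le c_1^M+c_2^M$. For deployment ratios $(\epsilon_1,\epsilon_2)\in[0,1]^2$ let $L=\epsilon_1c_1+(1-\epsilon_2)c_2$ and $$\mathrm{cost}_{reg}(\epsilon,c)=\begin{cases} r_1L-p_1c_1-p_2c_2 & \text{if } L\le c_1^M,\\ r_2L+(r_1-r_2)c_1^M-p_1c_1-p_2c_2 & \text{otherwise.}\end{cases}$$ Let $\theta\in[0,1]$, $\lambda_1,\lambda_2>0$, and suppose $(\epsilon_1,\epsilon_2)$ has joint density $$\theta\,\delta(\epsilon_1)\frac{\lambda_2e^{-\lambda_2\epsilon_2}}{1-e^{-\lambda_2}}+(1-\theta)\,\delta(\epsilon_2)\frac{\lambda_1e^{-\lambda_1\epsilon_1}}{1-e^{-\lambda_1}}\qquad\text{on }[0,1]^2.$$ For $j=1,2$ write $\bar\epsilon_j=\frac{1-(\lambda_j+1)e^{-\lambda_j}}{\lambda_j(1-e^{-\lambda_j})}$. Then $$\mathbb{E}_\epsilon[\mathrm{cost}_{reg}(\epsilon,c)]=\begin{cases}Q_1 & \text{if } c_1+c_2<c_1^M,\\ Q_2 & \text{if } c_2\ge c_1^M,\\ Q_3 & \text{otherwise,}\end{cases}$$ where $$Q_1=c_1\big[(1-\theta)r_1\bar\epsilon_1-p_1\big]+c_2\big[r_1(1-\theta\bar\epsilon_2)-p_2\big],$$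 $$Q_2=Q_1+(r_1-r_2)\Big(\theta\,\frac{\lambda_2c_1^M+c_2\big(1-\lambda_2-e^{-\lambda_2(1-c_1^M/c_2)}\big)}{\lambda_2(1-e^{-\lambda_2})}+(1-\theta)\big[c_1^M-c_2-c_1\bar\epsilon_1\big]\Big),$$ $$Q_3=Q_1+(r_1-r_2)(1-\theta)\,\frac{\lambda_1(c_2-c_1^M)+c_1\big(1+\lambda_1-e^{-\lambda_1(c_1^M-c_1-c_2)/c_1}\big)}{\lambda_1(e^{\lambda_1}-1)}.$$
   Context: $\epsilon_1$ is the deployment ratio of reg-up (load reduction $\epsilon_1c_1$) and $\epsilon_2$ that of reg-down; a facility committing $c_2$ to reg-down lowers its operating point by $c_2$ and, when deployed with ratio $\epsilon_2$, its load reduction is $(1-\epsilon_2)c_2$. The quantities $\bar\epsilon_j$ are the means of the truncated exponential distributions with parameters $\lambda_j$ on $[0,1]$ (written $\mathbb{E}[\epsilon_j]$ in the paper). $\delta$ is the Dirac delta: with probability $\theta$ only reg-down is deployed ($\epsilon_1=0$), otherwise only reg-up ($\epsilon_2=0$). *)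

(* Defs.v *)
From Stdlib Require Import Reals.
From Coquelicot Require Import Coquelicot.
Open Scope R_scope.

Definition load_red (e1 e2 c1 c2 : R) : R := e1 * c1 + (1 - e2) * c2.

Definition cost_reg (r1 r2 p1 p2 cM1 : R) (e1 e2 c1 c2 : R) : R :=
  let L := load_red e1 e2 c1 c2 in
  if Rle_dec L cM1 then r1 * L - p1 * c1 - p2 * c2
  else r2 * L + (r1 - r2) * cM1 - p1 * c1 - p2 * c2.

Definition trunc_exp_pdf (lam x : R) : R :=
  lam * exp (- lam * x) / (1 - exp (- lam)).

(* Expectation of a function g of (eps1, eps2) under the joint density
   theta * delta(eps1) * f_2(eps2) + (1 - theta) * delta(eps2) * f_1(eps1)
   on [0,1]^2: integrating out the Dirac deltas. *)
Definition expect_mix (theta lam1 lam2 : R) (g : R -> R -> R) : R :=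
  theta * RInt (fun e2 => g 0 e2 * trunc_exp_pdf lam2 e2) 0 1
  + (1 - theta) * RInt (fun e1 => g e1 0 * trunc_exp_pdf lam1 e1) 0 1.

(* bar eps_j (mean of the truncated exponential), as given in the paper *)
Definition eps_bar (lam : R) : R :=
  (1 - (lam + 1) * exp (- lam)) / (lam * (1 - exp (- lam))).

(* Main.v *)
Require Import Defs.
From Stdlib Require Import Reals Lra Psatz.
From Coquelicot Require Import Coquelicot.
Open Scope R_scope.
Definition Fa (lam al be x : R) : R :=
  (-(al+be*x)*exp(-lam*x) - be*exp(-lam*x)/lam)/(1-exp(-lam)).
Lemma den_ne (lam : R) : 0 < lam -> 1 - exp (-lam) <> 0.
Proof. intros. assert (exp (-lam) < 1). { rewrite <- exp_0. apply exp_increasing. lra. } lra. Qed.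
Lemma lin_pdf lam al be u v : 0 < lam ->
  is_RInt (fun x => (al + be*x) * trunc_exp_pdf lam x) u v (Fa lam al be v - Fa lam al be u).
Proof.
  intros Hl. pose proof (den_ne lam Hl) as Hd.
  replace (Fa lam al be v - Fa lam al be u) with (minus (Fa lam al be v) (Fa lam al be u)) by reflexivity.
  apply (is_RInt_derive (Fa lam al be)).
  - intros x _. unfold Fa, trunc_exp_pdf. auto_derive. easy. field. lra.
  - intros x _. apply (ex_derive_continuous (V:=R_CompleteNormedModule)). unfold trunc_exp_pdf. auto_derive. lra.
Qed.
Lemma cost_eq r1 r2 p1 p2 cM1 e1 e2 c1 c2 :
  cost_reg r1 r2 p1 p2 cM1 e1 e2 c1 c2 =
  r1 * load_red e1 e2 c1 c2 - p1*c1 - p2*c2 + (r2 - r1) * Rmax 0 (load_red e1 e2 c1 c2 - cM1).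
Proof.
  unfold cost_reg. set (L := load_red e1 e2 c1 c2).
  destruct (Rle_dec L cM1); unfold Rmax; destruct (Rle_dec 0 (L - cM1)); try lra; idtac.
assert (HL : L - cM1 = 0) by lra. rewrite HL. ring.
Qed.
Lemma piece lam u v g al be : 0 < lam ->
  (forall x, Rmin u v < x < Rmax u v -> g x = al + be * x) ->
  is_RInt (fun x => g x * trunc_exp_pdf lam x) u v (Fa lam al be v - Fa lam al be u).
Proof.
  intros Hl H. apply (is_RInt_ext (fun x => (al + be*x) * trunc_exp_pdf lam x)).
  - intros x Hx. rewrite H; auto.
  - apply lin_pdf; auto.
Qed.

Theorem theorem3 (cM1 cM2 r1 r2 p1 p2 c1 c2 theta lam1 lam2 : R) :
  0 < cM1 -> 0 < cM2 -> r1 < r2 ->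
  0 <= c1 -> 0 <= c2 -> c1 + c2 <= cM1 + cM2 ->
  0 <= theta <= 1 -> 0 < lam1 -> 0 < lam2 ->
  let Q1 := c1 * ((1 - theta) * r1 * eps_bar lam1 - p1)
            + c2 * (r1 * (1 - theta * eps_bar lam2) - p2) in
  let Q2 := Q1 + (r1 - r2) *
      (theta * ((lam2 * cM1 + c2 * (1 - lam2 - exp (- lam2 * (1 - cM1 / c2))))
                / (lam2 * (1 - exp (- lam2))))
       + (1 - theta) * (cM1 - c2 - c1 * eps_bar lam1)) in
  let Q3 := Q1 + (r1 - r2) * (1 - theta) *
      ((lam1 * (c2 - cM1) + c1 * (1 + lam1 - exp (- lam1 * (cM1 - c1 - c2) / c1)))
       / (lam1 * (exp lam1 - 1))) in
  expect_mix theta lam1 lam2 (fun e1 e2 => cost_reg r1 r2 p1 p2 cM1 e1 e2 c1 c2)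
  = (if Rlt_dec (c1 + c2) cM1 then Q1
     else if Rge_dec c2 cM1 then Q2
     else Q3).
Proof.
  intros HM1 HM2 Hr Hc1 Hc2 Hcc Ht Hl1 Hl2 Q1 Q2 Q3.
  pose proof (den_ne lam1 Hl1) as D1. pose proof (den_ne lam2 Hl2) as D2.
  unfold expect_mix.
  destruct (Rlt_dec (c1 + c2) cM1) as [C1|C1].
  - assert (IA : is_RInt (fun e2 => cost_reg r1 r2 p1 p2 cM1 0 e2 c1 c2 * trunc_exp_pdf lam2 e2) 0 1
       (Fa lam2 (r1*c2 - p1*c1 - p2*c2) (-r1*c2) 1 - Fa lam2 (r1*c2 - p1*c1 - p2*c2) (-r1*c2) 0)).
    { apply piece; auto. intros x; rewrite Rmin_left, Rmax_right by lra; intros [? ?].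
      rewrite cost_eq; unfold load_red. rewrite Rmax_left by nra. ring. }
    assert (IB : is_RInt (fun e1 => cost_reg r1 r2 p1 p2 cM1 e1 0 c1 c2 * trunc_exp_pdf lam1 e1) 0 1
       (Fa lam1 (r1*c2 - p1*c1 - p2*c2) (r1*c1) 1 - Fa lam1 (r1*c2 - p1*c1 - p2*c2) (r1*c1) 0)).
    { apply piece; auto. intros x; rewrite Rmin_left, Rmax_right by lra; intros [? ?].
      rewrite cost_eq; unfold load_red. rewrite Rmax_left by nra. ring. }
    rewrite (is_RInt_unique _ _ _ _ IA), (is_RInt_unique _ _ _ _ IB).
    unfold Q1, eps_bar, Fa. rewrite !Rmult_1_r, !Rmult_0_r, exp_0.
    field; auto; lra.
  - destruct (Rge_dec c2 cM1) as [C2|C2].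
    + assert (Pc2 : 0 < c2) by lra.
      set (a := 1 - cM1 / c2).
      assert (Ha : a * c2 = c2 - cM1) by (unfold a; field; lra).
      assert (Ha0 : 0 <= a) by nra. assert (Ha1 : a <= 1) by nra.
      assert (IA : is_RInt (fun e2 => cost_reg r1 r2 p1 p2 cM1 0 e2 c1 c2 * trunc_exp_pdf lam2 e2) 0 1
       ((Fa lam2 (r2*c2 + (r1-r2)*cM1 - p1*c1 - p2*c2) (-r2*c2) a - Fa lam2 (r2*c2 + (r1-r2)*cM1 - p1*c1 - p2*c2) (-r2*c2) 0)
       + (Fa lam2 (r1*c2 - p1*c1 - p2*c2) (-r1*c2) 1 - Fa lam2 (r1*c2 - p1*c1 - p2*c2) (-r1*c2) a))).
      { apply (is_RInt_Chasles (V:=R_CompleteNormedModule) _ 0 a 1).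
        - apply piece; auto. intros x; rewrite Rmin_left, Rmax_right by lra; intros [? ?].
          rewrite cost_eq; unfold load_red. rewrite Rmax_right by nra. ring.
        - apply piece; auto. intros x; rewrite Rmin_left, Rmax_right by lra; intros [? ?].
          rewrite cost_eq; unfold load_red. rewrite Rmax_left by nra. ring. }
      assert (IB : is_RInt (fun e1 => cost_reg r1 r2 p1 p2 cM1 e1 0 c1 c2 * trunc_exp_pdf lam1 e1) 0 1
       (Fa lam1 (r2*c2 + (r1-r2)*cM1 - p1*c1 - p2*c2) (r2*c1) 1 - Fa lam1 (r2*c2 + (r1-r2)*cM1 - p1*c1 - p2*c2) (r2*c1) 0)).
      { apply piece; auto. intros x; rewrite Rmin_left, Rmax_right by lra; intros [? ?].
        rewrite cost_eq; unfold load_red. rewrite Rmax_right by nra. ring. }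
      rewrite (is_RInt_unique _ _ _ _ IA), (is_RInt_unique _ _ _ _ IB).
      unfold Q2, Q1, eps_bar, Fa. rewrite !Rmult_1_r, !Rmult_0_r, exp_0. unfold a.
      field; repeat split; auto; lra.
    + assert (Pc1 : 0 < c1) by lra.
      set (b := (cM1 - c2) / c1).
      assert (Hb : b * c1 = cM1 - c2) by (unfold b; field; lra).
      assert (Hb0 : 0 <= b) by nra. assert (Hb1 : b <= 1) by nra.
      assert (IA : is_RInt (fun e2 => cost_reg r1 r2 p1 p2 cM1 0 e2 c1 c2 * trunc_exp_pdf lam2 e2) 0 1
       (Fa lam2 (r1*c2 - p1*c1 - p2*c2) (-r1*c2) 1 - Fa lam2 (r1*c2 - p1*c1 - p2*c2) (-r1*c2) 0)).
      { apply piece; auto. intros x; rewrite Rmin_left, Rmax_right by lra; intros [? ?].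
        rewrite cost_eq; unfold load_red. rewrite Rmax_left by nra. ring. }
      assert (IB : is_RInt (fun e1 => cost_reg r1 r2 p1 p2 cM1 e1 0 c1 c2 * trunc_exp_pdf lam1 e1) 0 1
       ((Fa lam1 (r1*c2 - p1*c1 - p2*c2) (r1*c1) b - Fa lam1 (r1*c2 - p1*c1 - p2*c2) (r1*c1) 0)
       + (Fa lam1 (r2*c2 + (r1-r2)*cM1 - p1*c1 - p2*c2) (r2*c1) 1 - Fa lam1 (r2*c2 + (r1-r2)*cM1 - p1*c1 - p2*c2) (r2*c1) b))).
      { apply (is_RInt_Chasles (V:=R_CompleteNormedModule) _ 0 b 1).
        - apply piece; auto. intros x; rewrite Rmin_left, Rmax_right by lra; intros [? ?].
          rewrite cost_eq; unfold load_red. rewrite Rmax_left by nra. ring.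
        - apply piece; auto. intros x; rewrite Rmin_left, Rmax_right by lra; intros [? ?].
          rewrite cost_eq; unfold load_red. rewrite Rmax_right by nra. ring. }
      rewrite (is_RInt_unique _ _ _ _ IA), (is_RInt_unique _ _ _ _ IB).
      assert (Eb : exp (- lam1 * b) = exp (- lam1 * (cM1 - c1 - c2) / c1) * exp (- lam1)).
      { rewrite <- exp_plus. f_equal. unfold b. field. lra. }
      assert (El : exp lam1 = / exp (- lam1)).
      { rewrite exp_Ropp, Rinv_inv. reflexivity. }
      assert (X0 : 0 < exp (- lam1)) by apply exp_pos.
      unfold Q3, Q1, eps_bar, Fa. rewrite !Rmult_1_r, !Rmult_0_r, exp_0, Eb, El.
      unfold b. set (Y := exp (- lam1 * (cM1 - c1 - c2) / c1)). set (X := exp (- lam1)) in *. clearbody Y X. field; repeat split; auto; try lra.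
Qed.
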